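(* Define $\psi:\mathcal{B}_n\to\mathcal{B}_n$ by $\psi(\pi)=\widetilde{\pi}$, where for $i\in[n]$, $\widetilde{\pi}_i=\pi_{n+1-i}-n-1$ if $\pi_{n+1-i}>0$ and $\widetilde{\pi}_i=\pi_{n+1-i}+n+1$ if $\pi_{n+1-i}<0$. Then $\psi$ is a bijection on $\mathcal{B}_n$, and for every $\pi\in\mathcal{B}_n$, $\mathrm{des}_B(\psi(\pi))=n-\mathrm{des}_B(\pi)$.
   Context: $\mathcal{B}_n$ is the group of signed permutations of $[n]$, i.e. bijections $\pi$ of $\{\pm1,\dots,\pm n\}$ with $\pi(-i)=-\pi(i)$, written $\pi=\pi_1\cdots\pi_n$ with $\pi_i=\pi(i)$, integers ordered naturally. Set $\pi_0=0$; $\mathrm{Des}_B(\pi)=\{i\in\{0,1,\dots,n-1\}:\pi_i>\pi_{i+1}\}$ and $\mathrm{des}_B(\pi)=|\mathrm{Des}_B(\pi)|$. *)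

(* Defs.v *)
From mathcomp Require Import all_boot all_order all_algebra.
Set Implicit Arguments. Unset Strict Implicit. Unset Printing Implicit Defensive.
Import Order.TTheory GRing.Theory Num.Theory.
Local Open Scope ring_scope.

(* A signed permutation pi of [n] is recorded by its window
   pi_1 ... pi_n, stored as p : {ffun 'I_n -> int} with p i = pi_(i+1).
   The window determines pi (pi(-i) = -pi(i)); a word is the window of a
   signed permutation iff each entry is a nonzero integer of absolute value
   at most n and the absolute values are pairwise distinct. *)
Definition signed_perm (n : nat) (p : {ffun 'I_n -> int}) : bool :=
  [forall i, (p i != 0) && (absz (p i) <= n)%N]
  && injectiveb (fun i => absz (p i)).

(* pi_k for k in {0,...,n}, with pi_0 = 0 (1-indexed positions). *)
Definition pival (n : nat) (p : {ffun 'I_n -> int}) (k : nat) : int :=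
  if k is k'.+1 then (if @insub _ (fun j => (j < n)%N) 'I_n k' is Some i then p i else 0) else 0.

Definition DesB (n : nat) (p : {ffun 'I_n -> int}) : {set 'I_n} :=
  [set i : 'I_n | pival p (nat_of_ord i).+1 < pival p i].

Definition desB (n : nat) (p : {ffun 'I_n -> int}) : nat := #|DesB p|.

Definition psi (n : nat) (p : {ffun 'I_n -> int}) : {ffun 'I_n -> int} :=
  [ffun i : 'I_n => let x := p (rev_ord i) in
     if 0 < x then x - (n.+1)%:Z else x + (n.+1)%:Z].

(* Main.v *)
Require Import Defs.
From mathcomp Require Import all_boot all_order all_algebra zify.
Import Order.TTheory GRing.Theory Num.Theory.
Local Open Scope ring_scope.

Definition fN (n : nat) (x : int) : int := if 0 < x then x - (n.+1)%:Z else x + (n.+1)%:Z.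

Lemma step (n : nat) (x y : int) : x != 0 -> (absz x <= n)%N -> y != 0 -> (absz y <= n)%N ->
  addn (fN n x < fN n y)%R (0 < y)%R = addn (x < y)%R (0 < x)%R.
Proof.
move=> hx hx' hy hy'; rewrite /fN.
case: (ltP 0 x) => h1; case: (ltP 0 y) => h2;
case: (ltP x y) => h3; try (case: ltP => h4); lia.
Qed.

Arguments step {n x y}.

Lemma fN_prop (n : nat) (x : int) : x != 0 -> (absz x <= n)%N ->
  [/\ fN n x != 0, absz (fN n x) = (n.+1 - absz x)%N & fN n (fN n x) = x].
Proof.
move=> h1 h2; rewrite /fN; case: (ltP 0 x) => h3; split; try lia;
case: ltP => h4; lia.
Qed.

Arguments fN_prop {n x}.

Lemma core (n : nat) (a g : nat -> int) :
  a 0%N = 0 -> g 0%N = 0 ->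
  (forall k, (0 < k <= n)%N -> a k != 0 /\ (absz (a k) <= n)%N) ->
  (forall k, (0 < k <= n)%N -> g k = fN n (a (n.+1 - k)%N)) ->
  (\sum_(0 <= i < n) (g i.+1 < g i)%R = \sum_(0 <= i < n) (a i < a i.+1)%R)%N.
Proof.
move=> a0 g0 ha hg.
case: n ha hg => [|n'] ha hg; first by rewrite !big_geq.
have aux : forall m, (m < n'.+1)%N ->
  addn (\sum_(n'.+1 - m <= i < n'.+1) (g i.+1 < g i)%R)%N (0 < a m.+1)%R
  = (\sum_(0 <= i < m.+1) (a i < a i.+1)%R)%N.
  elim=> [|m IH] hm.
    by rewrite subn0 big_geq // big_nat1 a0.
  rewrite big_ltn; last by lia.
  have -> : (n'.+1 - m.+1).+1 = (n'.+1 - m)%N by lia.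
  rewrite [RHS]big_nat_recr //=.
  rewrite (hg (n'.+1 - m)%N); last by lia.
  rewrite (hg (n'.+1 - m.+1)%N); last by lia.
  have -> : (n'.+2 - (n'.+1 - m))%N = m.+1 by lia.
  have -> : (n'.+2 - (n'.+1 - m.+1))%N = m.+2 by lia.
  have [h1 h1'] := ha m.+1 ltac:(lia).
  have [h2 h2'] := ha m.+2 ltac:(lia).
  have := step h1 h1' h2 h2'.
  have := IH ltac:(lia).
  lia.
rewrite big_ltn // g0 (hg 1%N) // subSS subn0.
have := aux n' (ltnSn _).
have [h1 h1'] := ha n'.+1 ltac:(lia).
have -> : (n'.+1 - n')%N = 1%N by lia.
rewrite /fN; case: (ltP 0 (a n'.+1)) => h3; case: ltP => h4; lia.
Qed.

Lemma pivalS (n : nat) (p : {ffun 'I_n -> int}) (i : 'I_n) : pival p i.+1 = p i.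
Proof.
rewrite /pival; case: insubP => [u _ hu|]; last by rewrite ltn_ord.
by congr (p _); apply: val_inj.
Qed.

Arguments pivalS {n}.

Lemma sp_unpack (n : nat) (p : {ffun 'I_n -> int}) : signed_perm p ->
  (forall i, p i != 0 /\ (absz (p i) <= n)%N) /\ injective (fun i => absz (p i)).
Proof.
case/andP => /forallP h /injectiveP hi; split => // i.
by case/andP: (h i).
Qed.

Arguments sp_unpack {n p}.

Lemma pival_range (n : nat) (p : {ffun 'I_n -> int}) : signed_perm p ->
  forall k, (0 < k <= n)%N -> pival p k != 0 /\ (absz (pival p k) <= n)%N.
Proof.
move=> /sp_unpack [h _] [|k] // /andP [_ hk].
by rewrite (pivalS p (Ordinal hk)).
Qed.

Arguments pival_range {n p}.

Lemma psiE (n : nat) (p : {ffun 'I_n -> int}) i : psi p i = fN n (p (rev_ord i)).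
Proof. by rewrite ffunE. Qed.

Lemma psi_sp (n : nat) (p : {ffun 'I_n -> int}) : signed_perm p -> signed_perm (psi p).
Proof.
move=> /sp_unpack [h hi]; apply/andP; split.
  apply/forallP => i; rewrite psiE.
  have [h1 h2] := h (rev_ord i); have [-> -> _] := fN_prop h1 h2.
  by apply/andP; split => //; lia.
apply/injectiveP => i j /=; rewrite !psiE.
have [h1 h2] := h (rev_ord i); have [_ -> _] := fN_prop h1 h2.
have [h3 h4] := h (rev_ord j); have [_ -> _] := fN_prop h3 h4.
move=> e; apply: rev_ord_inj; apply: hi => /=; lia.
Qed.

Arguments psi_sp {n p}.

Lemma psiK (n : nat) (p : {ffun 'I_n -> int}) : signed_perm p -> psi (psi p) = p.
Proof.
move=> /sp_unpack [h _]; apply/ffunP => i; rewrite !psiE rev_ordK.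
by have [h1 h2] := h i; have [_ _ ->] := fN_prop h1 h2.
Qed.

Arguments psiK {n p}.

Lemma desB_sum (n : nat) (p : {ffun 'I_n -> int}) :
  desB p = (\sum_(0 <= i < n) (pival p i.+1 < pival p i)%R)%N.
Proof.
rewrite /desB /DesB -sum1_card big_mkcond big_mkord /=.
by apply: eq_bigr => i _; rewrite inE; case: ifP.
Qed.

Theorem lemma2p1 (n : nat) :
  (forall p, signed_perm p -> signed_perm (@psi n p)) /\
  (forall p q, signed_perm p -> signed_perm q -> @psi n p = psi q -> p = q) /\
  (forall q, signed_perm q -> exists2 p, signed_perm p & @psi n p = q) /\
  (forall p, signed_perm p -> desB (@psi n p) = (n - desB p)%N).
Proof.
split; first by move=> p hp; apply: psi_sp.
split.
  by move=> p q hp hq e; rewrite -(psiK hp) -(psiK hq) e.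
split.
  by move=> q hq; exists (psi q); [apply: psi_sp | apply: psiK].
move=> p hp; rewrite !desB_sum.
rewrite (@core n (pival p) (pival (psi p))) //; last first.
- move=> [|k] // /andP [_ hk].
  rewrite (pivalS (psi p) (Ordinal hk)) psiE.
  have -> : (n.+1 - k.+1)%N = (rev_ord (Ordinal hk)).+1 by rewrite /=; lia.
  by rewrite pivalS.
- exact: pival_range.
have [_ hi] := sp_unpack hp.
have tot : addn (\sum_(0 <= i < n) (pival p i.+1 < pival p i)%R)
              (\sum_(0 <= i < n) (pival p i < pival p i.+1)%R) = n.
  rewrite -big_split /=.
  rewrite (eq_big_nat _ _ (F2 := fun _ => 1%N)); first by rewrite sum_nat_const_nat; lia.
  move=> i /andP [_ hin].
  have ne : pival p i != pival p i.+1.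
    case: i hin => [|i] hin.
      by have [h _] := pival_range hp 1%N ltac:(lia); rewrite eq_sym.
    rewrite (pivalS p (Ordinal (ltnW hin))) (pivalS p (Ordinal hin)).
    apply/eqP => e; have := hi _ _ (congr1 absz e) => /(congr1 val) /=; lia.
  by case: ltgtP ne.
lia.
Qed.
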